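(* Let $n,d\ge1$, $p\ge d$, $\Delta\in\mathbb{R}^{nd\times nd}$, $\delta>0$, $Z^{\top}=[I_d,\dots,I_d]\in\mathbb{R}^{d\times nd}$, and let $S\in\mathbb{R}^{nd\times p}$ have blocks $S_i$ with $S_iS_i^{\top}=I_d$. If $d_F(S,Z)\le\delta\sqrt{d/n}\,\|\Delta\|_{\mathrm{op}}$, then \[ n\ge\sigma_{\max}(Z^{\top}S)\ge\sigma_{\min}(Z^{\top}S)\ge n-\frac{\delta^2d\|\Delta\|_{\mathrm{op}}^2}{2n}. \]
   Context: $Z^{\top}S=\sum_jS_j\in\mathbb{R}^{d\times p}$; $\sigma_{\max},\sigma_{\min}$ denote its largest and $d$-th (smallest of the $d$) singular values. $d_F(S,Z)=\min\{(\sum_i\|S_i-Q\|_F^2)^{1/2}:Q\in\mathbb{R}^{d\times p},QQ^{\top}=I_d\}$. *)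

(* Defs.v *)
From mathcomp Require Import all_boot all_order all_algebra.
From mathcomp Require Import all_classical all_reals.
Set Implicit Arguments. Unset Strict Implicit. Unset Printing Implicit Defensive.
Import Order.TTheory GRing.Theory Num.Theory.
Local Open Scope ring_scope.
Local Open Scope classical_set_scope.

Section Defs.
Variable R : realType.

(* The largest singular value is the
   square root of the largest eigenvalue; the d-th (smallest of the d) is the
   square root of the smallest eigenvalue. *)
Definition sq_singvals {d p : nat} (M : 'M[R]_(d, p)) : set R :=
  [set l | eigenvalue (M *m M^T) l].

Definition sigma_max {d p : nat} (M : 'M[R]_(d, p)) : R :=
  Num.sqrt (sup (sq_singvals M)).

Definition sigma_min {d p : nat} (M : 'M[R]_(d, p)) : R :=
  Num.sqrt (inf (sq_singvals M)).

Definition opnorm {m k : nat} (A : 'M[R]_(m, k)) : R := sigma_max A.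

Definition frob2 {m k : nat} (A : 'M[R]_(m, k)) : R :=
  \sum_(i < m) \sum_(j < k) A i j ^+ 2.

(* i-th d x p block of S in R^{nd x p}: rows i*d, ..., i*d + d - 1 *)
Definition blk {n d p : nat} (S : 'M[R]_(n * d, p)) (i : 'I_n) : 'M[R]_(d, p) :=
  \matrix_(a < d, b < p) S (mxvec_index i a) b.

(* Z in R^{nd x d} with Z^T = [I_d, ..., I_d] *)
Definition Zmat (n d : nat) : 'M[R]_(n * d, d) :=
  \matrix_(k < n * d, b < d) ((k %% d)%N == b)%:R.

Definition dF {n d p : nat} (S : 'M[R]_(n * d, p)) : R :=
  inf [set x | exists Q : 'M[R]_(d, p), Q *m Q^T = 1%:M /\
                 x = Num.sqrt (\sum_(i < n) frob2 (blk S i - Q))].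
End Defs.

(* Main.v *)
Require Import Defs.
From mathcomp Require Import all_boot all_order all_algebra.
From mathcomp Require Import all_classical all_reals.
From mathcomp Require Import complex.
From mathcomp Require Import ring lra.
Import Order.TTheory GRing.Theory Num.Theory.
Set Implicit Arguments. Unset Strict Implicit. Unset Printing Implicit Defensive.
Local Open Scope ring_scope.
Lemma index_allpairs (T1 T2 : eqType) (s1 : seq T1) (s2 : seq T2) x1 x2 :
  x1 \in s1 -> x2 \in s2 ->
  index (x1, x2) [seq (a, b) | a <- s1, b <- s2] = (index x1 s1 * size s2 + index x2 s2)%N.
Proof.
move=> h1 h2; elim: s1 h1 => [//|a s1 IH] h1 /=.
rewrite index_cat.
have [->|ne] := eqVneq a x1.
  rewrite mul0n add0n.
  have -> : (x1, x2) \in [seq (x1, b) | b <- s2] by apply/mapP; exists x2.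
  by rewrite index_map // => u v [].
have -> : (x1, x2) \in [seq (a, b) | b <- s2] = false.
  by apply/negbTE/negP => /mapP [b _ [e _]]; rewrite e eqxx in ne.
rewrite in_cons eq_sym (negbTE ne) /= in h1.
by rewrite size_map IH // mulSn addnA.
Qed.

Lemma val_mxvec_index m n (i : 'I_m) (j : 'I_n) :
  nat_of_ord (mxvec_index i j) = (i * n + j)%N.
Proof.
rewrite /mxvec_index /= /enum_rank enum_rank_in.unlock insubdK; last first.
  by rewrite unfold_in /= cardT index_mem mem_enum.
rewrite enumT unlock /= /prod_enum.
rewrite index_allpairs -?enumT ?mem_enum //.
by rewrite index_enum_ord size_enum_ord index_enum_ord.
Qed.

Lemma Mblk (R : realType) n d p (S : 'M[R]_(n * d, p)) :
  (Zmat R n d)^T *m S = \sum_i blk S i.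
Proof.
apply/matrixP => a b; rewrite !mxE summxE.
have -> : \sum_i blk S i a b = \sum_i \sum_j ((j == a)%:R * S (mxvec_index i j) b).
  apply: eq_bigr => i _; rewrite (bigD1 a) //= eqxx mul1r big1 ?addr0 ?mxE //.
  by move=> j /negbTE ->; rewrite mul0r.
rewrite pair_bigA /= (reindex _ (curry_mxvec_bij _ _)) /=.
apply: eq_bigr => -[i j] _ /=; rewrite !mxE val_mxvec_index.
rewrite modnMDl modn_small //.
Qed.
Section Dot.
Variable R : realFieldType.
Definition dot {m} (u w : 'rV[R]_m) : R := (u *m w^T) 0 0.
Lemma dotE m (u w : 'rV[R]_m) : dot u w = \sum_k u 0 k * w 0 k.
Proof. by rewrite /dot !mxE; apply: eq_bigr => k _; rewrite mxE. Qed.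
Lemma dotC m (u w : 'rV[R]_m) : dot u w = dot w u.
Proof. by rewrite !dotE; apply: eq_bigr => k _; rewrite mulrC. Qed.
Lemma dotDl m (u v w : 'rV[R]_m) : dot (u + v) w = dot u w + dot v w.
Proof. by rewrite /dot mulmxDl mxE. Qed.
Lemma dotBl m (u v w : 'rV[R]_m) : dot (u - v) w = dot u w - dot v w.
Proof. by rewrite /dot mulmxBl !mxE. Qed.
Lemma dotZl m a (u w : 'rV[R]_m) : dot (a *: u) w = a * dot u w.
Proof. by rewrite /dot -scalemxAl mxE. Qed.
Lemma dotDr m (u v w : 'rV[R]_m) : dot w (u + v) = dot w u + dot w v.
Proof. by rewrite dotC dotDl !(dotC w). Qed.
Lemma dotBr m (u v w : 'rV[R]_m) : dot w (u - v) = dot w u - dot w v.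
Proof. by rewrite dotC dotBl !(dotC w). Qed.
Lemma dotZr m a (u w : 'rV[R]_m) : dot w (a *: u) = a * dot w u.
Proof. by rewrite dotC dotZl dotC. Qed.
Lemma dot_suml m (I : finType) (F : I -> 'rV[R]_m) w :
  dot (\sum_i F i) w = \sum_i dot (F i) w.
Proof. by rewrite /dot mulmx_suml summxE. Qed.
Lemma dot_mulmx m k (u : 'rV[R]_m) (B : 'M[R]_(m, k)) (w : 'rV[R]_k) :
  dot (u *m B) w = dot u (w *m B^T).
Proof. by rewrite /dot trmx_mul trmxK mulmxA. Qed.
Lemma dot_ge0 m (u : 'rV[R]_m) : 0 <= dot u u.
Proof. by rewrite dotE; apply: sumr_ge0 => k _; rewrite -expr2 sqr_ge0. Qed.
Lemma dot_eq0 m (u : 'rV[R]_m) : dot u u = 0 -> u = 0.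
Proof.
rewrite dotE => /eqP; rewrite psumr_eq0 => [/allP H|k _]; last by rewrite -expr2 sqr_ge0.
apply/rowP => k; have := H k (mem_index_enum k); rewrite /= mxE -expr2 sqrf_eq0.
by move/eqP.
Qed.
Lemma dot_CS m (u w : 'rV[R]_m) : dot u w ^+ 2 <= dot u u * dot w w.
Proof.
have [u0|] := eqVneq (dot u u) 0.
  by rewrite u0 (dot_eq0 u0) /dot mul0mx mxE expr0n mul0r.
move=> Nn0; have N0 : 0 < dot u u by rewrite lt_def Nn0 dot_ge0.
have := dot_ge0 (dot u u *: w - dot u w *: u).
rewrite !(dotBl, dotBr, dotZl, dotZr) (dotC w u) => H.
have H2 : 0 <= dot u u * (dot u u * dot w w - dot u w ^+ 2) by nra.
by rewrite pmulr_rge0 // subr_ge0 in H2.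
Qed.
End Dot.

Section Main.
Variable R : realType.

Lemma sum_sq n m (a : 'I_n -> 'rV[R]_m) :
  dot (\sum_i a i) (\sum_i a i) <= n%:R * \sum_i dot (a i) (a i).
Proof.
have -> : \sum_i dot (a i) (a i) = \sum_i \sum_k a i 0 k * a i 0 k.
  by apply: eq_bigr => i _; rewrite dotE.
rewrite dotE exchange_big /= mulr_sumr; apply: ler_sum => k _.
pose u : 'rV[R]_n := const_mx 1; pose w : 'rV[R]_n := \row_i a i 0 k.
have := dot_CS u w.
have -> : dot u w = (\sum_i a i) 0 k by rewrite dotE summxE; apply: eq_bigr => i _; rewrite !mxE mul1r.
have -> : dot u u = n%:R by rewrite dotE; under eq_bigr do rewrite mxE mulr1; rewrite sumr_const card_ord.
have -> : dot w w = \sum_i a i 0 k * a i 0 k by rewrite dotE; apply: eq_bigr => i _; rewrite !mxE.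
by rewrite expr2.
Qed.

Lemma frob_bound d p (v : 'rV[R]_d) (X : 'M[R]_(d, p)) :
  dot (v *m X) (v *m X) <= dot v v * frob2 X.
Proof.
rewrite dotE /frob2 exchange_big /= mulr_sumr; apply: ler_sum => j _.
pose r : 'rV[R]_d := \row_k X k j.
have := dot_CS v r.
have -> : dot v r = (v *m X) 0 j by rewrite dotE mxE; apply: eq_bigr => k _; rewrite mxE.
have -> : dot r r = \sum_k X k j ^+ 2 by rewrite dotE; apply: eq_bigr => k _; rewrite mxE expr2.
by rewrite expr2.
Qed.

Lemma eig_bounds n d p (B : 'I_n -> 'M[R]_(d, p))
  (hB : forall i, B i *m (B i)^T = 1%:M) l :
  eigenvalue ((\sum_i B i) *m (\sum_i B i)^T) l ->
  [/\ 0 <= l, l <= n%:R ^+ 2 &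
   forall Q : 'M[R]_(d, p), Q *m Q^T = 1%:M ->
     0 <= n%:R - (\sum_i frob2 (B i - Q)) / 2 ->
     (n%:R - (\sum_i frob2 (B i - Q)) / 2) ^+ 2 <= l].
Proof.
move=> /eigenvalueP [v vM vn0].
set M := \sum_i B i.
set N := dot v v.
have N0 : 0 < N by rewrite lt_def dot_ge0 andbT; apply/eqP => /dot_eq0 /eqP; rewrite (negbTE vn0).
have hl : dot (v *m M) (v *m M) = l * N by rewrite dot_mulmx -mulmxA vM dotZr.
have nX : forall X : 'M[R]_(d, p), X *m X^T = 1%:M -> dot (v *m X) (v *m X) = N.
  by move=> X hX; rewrite dot_mulmx -mulmxA hX mulmx1.
have l0 : 0 <= l.
  have := dot_ge0 (v *m M); rewrite hl => H.
  by rewrite -(pmulr_lge0 _ N0).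
split => //.
  have := sum_sq (fun i => v *m B i); rewrite -mulmx_sumr -/M hl.
  under eq_bigr do rewrite nX //.
  rewrite sumr_const card_ord => H.
  have : l * N <= n%:R ^+ 2 * N by rewrite -[N *+ n]mulr_natl mulrA -expr2 in H.
  by rewrite ler_pM2r.
move=> Q hQ.
set D := \sum_i frob2 (B i - Q) => m0.
set c := dot (v *m M) (v *m Q).
have cs : c ^+ 2 <= l * N * N by rewrite /c -hl -(nX Q hQ) dot_CS.
have ci : forall i, N - N * frob2 (B i - Q) / 2 <= dot (v *m B i) (v *m Q).
  move=> i; have := frob_bound v (B i - Q).
  rewrite mulmxBr !(dotBl, dotBr) (nX _ (hB i)) (nX _ hQ) (dotC (v *m Q)) => H.
  rewrite -/N in H; lra.
have cge : N * (n%:R - D / 2) <= c.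
  rewrite /c /M mulmx_sumr dot_suml.
  apply: le_trans (ler_sum _ (fun i _ => ci i)).
  rewrite sumrB sumr_const card_ord -mulr_suml -mulr_sumr -/D -[N *+ n]mulr_natr.
  lra.
have : (N * (n%:R - D / 2)) ^+ 2 <= l * N * N.
  apply: le_trans cs; rewrite ler_sqr ?nnegrE //; first by rewrite mulr_ge0 // ltW.
  by apply: le_trans cge; rewrite mulr_ge0 // ltW.
rewrite exprMn -mulrA -expr2 mulrC ler_pM2r //.
by rewrite exprn_gt0.
Qed.
End Main.
Section Eig.
Variable R : rcfType.
Local Open Scope complex_scope.
Local Notation cRe := (@complex.Re R).
Local Notation cIm := (@complex.Im R).
Lemma cReM (a b : R[i]) : cRe (a * b) = cRe a * cRe b - cIm a * cIm b.
Proof. by case: a b => ? ? [? ?]. Qed.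
Lemma cImM (a b : R[i]) : cIm (a * b) = cRe a * cIm b + cIm a * cRe b.
Proof. by case: a b => ? ? [? ?]. Qed.
Lemma cRe_sum (I : finType) (F : I -> R[i]) : cRe (\sum_i F i) = \sum_i cRe (F i).
Proof. by apply: (big_morph cRe) => // [[? ?] [? ?]]. Qed.
Lemma cIm_sum (I : finType) (F : I -> R[i]) : cIm (\sum_i F i) = \sum_i cIm (F i).
Proof. by apply: (big_morph cIm) => // [[? ?] [? ?]]. Qed.

Lemma sym_eigen d (A : 'M[R]_d) : (0 < d)%N -> A^T = A -> exists a, eigenvalue A a.
Proof.
move=> d0 sA.
pose Ac := map_mx (real_complex R) A.
have [z /eigenvalueP [w wAc wn0]] := @eigenvalue_closed _ _ Ac d0.
pose x := map_mx cRe w; pose y := map_mx cIm w.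
have hx : x *m A = cRe z *: x - cIm z *: y.
  apply/rowP => j; move/rowP: wAc => /(_ j); rewrite !mxE => /(congr1 cRe).
  rewrite cRe_sum cReM => <-; apply: eq_bigr => k _; rewrite !mxE cReM /=.
  by rewrite mulr0 subr0.
have hy : y *m A = cIm z *: x + cRe z *: y.
  apply/rowP => j; move/rowP: wAc => /(_ j); rewrite !mxE => /(congr1 cIm).
  rewrite cIm_sum cImM addrC => <-; apply: eq_bigr => k _; rewrite !mxE cImM /=.
  by rewrite mulr0 add0r.
have key : cIm z * (dot x x + dot y y) = 0.
  have := dot_mulmx x A y; rewrite sA -/(dot x (y *m A)) hx hy.
  rewrite dotBl dotDr !dotZl !dotZr => H.
  by apply/eqP; rewrite -subr_eq0; apply/eqP; lra.
have xy0 : x != 0 \/ y != 0.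
  case: (eqVneq x 0) => [x0|]; last by left.
  case: (eqVneq y 0) => [y0|]; last by right.
  case/negP: wn0; apply/eqP/rowP => j.
  move/rowP: x0 => /(_ j); move/rowP: y0 => /(_ j); rewrite !mxE.
  by case: (w 0 j) => a b /= -> ->.
have Iz : cIm z = 0.
  move/eqP: key; rewrite mulf_eq0 => /orP [/eqP //|].
  rewrite paddr_eq0 ?dot_ge0 // => /andP [/eqP /dot_eq0 x0 /eqP /dot_eq0 y0].
  by case: xy0; rewrite ?x0 ?y0 eqxx.
exists (cRe z); apply/eigenvalueP.
case: xy0 => [xn0|yn0]; [exists x | exists y] => //.
  by rewrite hx Iz scale0r subr0.
by rewrite hy Iz scale0r add0r.
Qed.
End Eig.
Lemma lim_aux (R : realType) (x y b : R) : 0 <= b ->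
  (forall e, 0 < e -> x - (b + e) ^+ 2 / 2 <= y) -> x - b ^+ 2 / 2 <= y.
Proof.
move=> b0 H; apply/ler_addgt0Pr => e e0.
pose e' := e / (b + 1 + e).
have hp : 0 < b + 1 + e by lra.
have e'0 : 0 < e' by rewrite divr_gt0.
have he : e' * (b + 1 + e) = e by rewrite /e' divfK // gt_eqF.
have e'1 : e' <= 1 by nra.
have := H e' e'0; nra.
Qed.

Theorem lemma4 (R : realType) (n d p : nat) (hn : (1 <= n)%N) (hd : (1 <= d)%N)
  (hp : (d <= p)%N) (Delta : 'M[R]_(n * d, n * d)) (delta : R) (hdelta : 0 < delta)
  (S : 'M[R]_(n * d, p))
  (hS : forall i : 'I_n, blk S i *m (blk S i)^T = 1%:M)
  (hdist : dF S <= delta * Num.sqrt (d%:R / n%:R) * opnorm Delta) :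
  let M := (Zmat R n d)^T *m S in
  sigma_max M <= n%:R /\ sigma_min M <= sigma_max M /\
  n%:R - delta ^+ 2 * d%:R * opnorm Delta ^+ 2 / (2 * n%:R) <= sigma_min M.
Proof.
move=> M.
have hM : M = \sum_i blk S i by rewrite /M Mblk.
set E := sq_singvals M.
have EP : forall l, E l -> [/\ 0 <= l, l <= n%:R ^+ 2 &
   forall Q : 'M[R]_(d, p), Q *m Q^T = 1%:M ->
     0 <= n%:R - (\sum_i frob2 (blk S i - Q)) / 2 ->
     (n%:R - (\sum_i frob2 (blk S i - Q)) / 2) ^+ 2 <= l].
  move=> l El; have := @eig_bounds R n d p (blk S) hS l; rewrite -hM; apply; exact: El.
have [l0 El0] : exists l, E l.
  by apply: sym_eigen hd _; rewrite trmx_mul trmxK.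
have hlb : has_lbound E by exists 0 => l /EP [].
have hub : has_ubound E by exists (n%:R ^+ 2) => l /EP [].
have supn : sup E <= n%:R ^+ 2 by apply: ge_sup; [exists l0 | move=> l /EP []].
have infsup : inf E <= sup E := le_trans (ge_inf hlb El0) (ub_le_sup hub El0).
split.
  apply: le_trans (ler_wsqrtr supn) _.
  by rewrite sqrtr_sqr normr_nat.
split; first exact: ler_wsqrtr.
set b := delta * Num.sqrt (d%:R / n%:R) * opnorm Delta.
have n0 : (0 : R) < n%:R by rewrite ltr0n.
have b0 : 0 <= b.
  by rewrite /b !mulr_ge0 ?sqrtr_ge0 // ?ltW // /opnorm /sigma_max sqrtr_ge0.
have -> : delta ^+ 2 * d%:R * opnorm Delta ^+ 2 / (2 * n%:R) = b ^+ 2 / 2.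
  rewrite /b !exprMn (@sqr_sqrtr _ (d%:R / n%:R)) ?divr_ge0 ?ler0n //.
  by field; rewrite gt_eqF.
apply: lim_aux b0 _ => e e0.
set F := ([set x : R | exists Q : 'M[R]_(d, p), Q *m Q^T = 1%:M /\
                 x = Num.sqrt (\sum_(i < n) frob2 (blk S i - Q))])%classic.
have hF : has_inf F.
  split.
    exists (Num.sqrt (\sum_(i < n) frob2 (blk S i - pid_mx d))), (pid_mx d); split => //.
    by rewrite tr_pid_mx mul_pid_mx minnn; apply/matrixP => i j; rewrite !mxE (minn_idPr hp) ltn_ord andbT.
  by exists 0 => x [Q [_ ->]]; rewrite sqrtr_ge0.
have [x [Q [hQ ->]] hx] := inf_adherent e0 hF.
set D := \sum_(i < n) frob2 (blk S i - Q) in hx.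
have D0 : 0 <= D.
  by apply: sumr_ge0 => i _; apply: sumr_ge0 => k _; apply: sumr_ge0 => j _; rewrite sqr_ge0.
have hx2 : Num.sqrt D < b + e.
  by apply: (lt_le_trans hx); rewrite lerD2r.
have hD : D <= (b + e) ^+ 2.
  have := sqr_sqrtr D0; have := sqrtr_ge0 D; nra.
case: (lerP (n%:R - (b + e) ^+ 2 / 2) 0) => t0.
  exact: le_trans t0 (sqrtr_ge0 _).
have m0 : 0 <= n%:R - D / 2 by lra.
have : (n%:R - D / 2) ^+ 2 <= inf E.
  by apply: lb_le_inf; [exists l0 | move=> l /EP [_ _ H]; apply: H].
move/ler_wsqrtr; rewrite sqrtr_sqr ger0_norm // => H.
apply: le_trans H; lra.
Qed.
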